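(* The line graph $L(K_{s,s})$ of the complete bipartite graph $K_{s,s}$ with $s>2$, the Petersen graph, and the Clebsch graph are not $\mathcal{C}$-$\mathrm{MH}$.
   Context: Subgraphs are induced. A homomorphism maps edges to edges; a monomorphism is an injective homomorphism. A graph $G$ is $\mathcal{C}$-$\mathrm{MH}$ if every monomorphism from a finite connected induced subgraph of $G$ into $G$ extends to a homomorphism $G\to G$. $L(K_{s,s})$ has vertex set $\{1,\dots,s\}^2$ with $(u,i)\sim(v,j)$ iff exactly one of $u=v$, $i=j$ holds (distinct vertices sharing a coordinate). The Petersen graph has as vertices the $2$-element subsets of $\{1,\dots,5\}$, adjacent iff disjoint. The Clebsch graph is the graph obtained from the $5$-dimensional cube $Q_5$ by identifying antipodal vertices. *)

(* Defs.v *)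
From HB Require Import structures.
From mathcomp Require Import all_boot.
Set Implicit Arguments. Unset Strict Implicit. Unset Printing Implicit Defensive.

(* A graph is a finite type of vertices with a (symmetric, irreflexive) edge relation. *)

Definition is_hom (T : finType) (e : rel T) (g : T -> T) : Prop :=
  forall x y, e x y -> e (g x) (g y).

Definition induced_connected (T : finType) (e : rel T) (A : {set T}) : Prop :=
  {in A &, forall x y, connect [rel u v | [&& u \in A, v \in A & e u v]] x y}.

(* The monomorphism is given by
   a function f : T -> T of which only the values on A matter. *)
Definition CMH (T : finType) (e : rel T) : Prop :=
  forall (A : {set T}) (f : T -> T),
    induced_connected e A ->
    {in A &, injective f} ->
    {in A &, forall x y, e x y -> e (f x) (f y)} ->
    exists g : T -> T, is_hom e g /\ {in A, forall x, g x = f x}.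

(* Line graph of K_{s,s}: vertices [s]^2, (u,i) ~ (v,j) iff exactly one of
   u = v, i = j holds. *)
Definition LKss_rel (s : nat) : rel ('I_s * 'I_s) :=
  fun p q => (p.1 == q.1) (+) (p.2 == q.2).

Definition petersen_vertex := {A : {set 'I_5} | #|A| == 2}.
Definition petersen_rel : rel petersen_vertex :=
  fun A B => [disjoint val A & val B].

(* Clebsch graph: Q_5 with antipodal vertices identified.  Vertices of the
   quotient are the antipodal pairs {x, ~x}; two classes are adjacent iff
   some representatives are adjacent in Q_5. *)
Definition bvec := {ffun 'I_5 -> bool}.
Definition antipode (x : bvec) : bvec := [ffun i => ~~ x i].
Definition cube_rel : rel bvec := fun x y => #|[set i | x i != y i]| == 1.
Definition clebsch_vertex :=
  {S : {set bvec} | [exists x : bvec, S == [set x; antipode x]]}.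
Definition clebsch_rel : rel clebsch_vertex :=
  fun S U => [exists x in val S, exists y in val U, cube_rel x y].

(* Main.v *)
Require Import Defs.
From mathcomp Require Import all_boot.
Set Implicit Arguments. Unset Strict Implicit. Unset Printing Implicit Defensive.

Lemma notCMH (T : finType) (e : rel T) (p0 : T) (p : seq T) (f : T -> T) (v a b c : T) :
  symmetric e ->
  path e p0 p ->
  all (fun x => all (fun y => (f x == f y) ==> (x == y)) (p0::p)) (p0::p) ->
  all (fun x => all (fun y => e x y ==> e (f x) (f y)) (p0::p)) (p0::p) ->
  [&& a \in p0::p, b \in p0::p & c \in p0::p] ->
  [&& e v a, e v b & e v c] ->
  (forall w, ~~ [&& e w (f a), e w (f b) & e w (f c)]) ->
  ~ CMH e.
Proof.
move=> esym hp hinj hedge /and3P[ha hb hc] /and3P[va vb vc] hw H.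
set A := [set z in p0 :: p].
have memA z : (z \in A) = (z \in p0 :: p) by rewrite inE.
set R := [rel u w | [&& u \in A, w \in A & e u w]].
have Rsym : symmetric R.
  by move=> x y /=; rewrite esym; case: (x \in A); case: (y \in A).
have pR : path R p0 p.
  apply: (sub_in_path (P := mem A)) hp.
    by move=> x y xA yA exy /=; rewrite xA yA exy.
  apply/allP => z zs; have : z \in A by rewrite memA. by [].
have c0 : {subset p0 :: p <= connect R p0} by apply: path_connect.
have conn : induced_connected e A.
  move=> x y; rewrite !memA => xA yA.
  apply: (connect_trans (y := p0)); last exact: c0.
  by rewrite (sym_connect_sym Rsym); apply: c0.
have inj : {in A &, injective f}.
  move=> x y; rewrite !memA => xA yA fxy.
  have := allP hinj x xA => /allP /(_ y yA).
  by rewrite fxy eqxx /= => /eqP.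
have ed : {in A &, forall x y, e x y -> e (f x) (f y)}.
  move=> x y; rewrite !memA => xA yA exy.
  have := allP hedge x xA => /allP /(_ y yA).
  by rewrite exy.
have [g [hg gf]] := H A f conn inj ed.
have := hw (g v).
by rewrite -!gf ?memA // !hg.
Qed.

Lemma lkss_part (s : nat) : 2 < s -> ~ CMH (@LKss_rel s).
Proof.
move=> hs.
have h0 : 0 < s by apply: leq_trans hs.
have h1 : 1 < s by apply: leq_trans hs.
pose o0 := Ordinal h0. pose o1 := Ordinal h1. pose o2 := Ordinal hs.
pose c := (o0, o2). pose a := (o0, o1). pose d := (o1, o1). pose b := (o1, o0).
pose f := fun p : 'I_s * 'I_s =>
  if p == c then (o0, o1) else if p == a then (o0, o0)
  else if p == d then (o1, o0) else (o1, o1).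
apply: (@notCMH _ _ c [:: a; d; b] f (o0, o0) a b c).
- by move=> x y; rewrite /LKss_rel eq_sym [y.2 == _]eq_sym.
- by [].
- by [].
- by [].
- by rewrite !inE !eqxx !orbT.
- by [].
- move=> [u i]; rewrite /f /= /LKss_rel /=.
  case: u => [u Hu]; case: i => [i Hi] /=.
  by case: u Hu => [|[|u]] Hu; case: i Hi => [|[|i]] Hi.
Qed.

Lemma pv_proof (i j : 'I_5) (h : i != j) : #|[set i; j]| == 2.
Proof. by rewrite cards2 h. Qed.

Definition pv (i j : 'I_5) (h : i != j) : petersen_vertex :=
  exist _ [set i; j] (pv_proof h).

Definition eq2 (i j k l : 'I_5) :=
  ((i == k) && (j == l)) || ((i == l) && (j == k)).

Lemma set2_eq2 (i j k l : 'I_5) : i != j ->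
  [set i; j] = [set k; l] -> eq2 i j k l.
Proof.
move=> h E'.
have Hi : i \in [set k; l] by rewrite -E' !inE eqxx.
have Hj : j \in [set k; l] by rewrite -E' !inE eqxx orbT.
move: Hi Hj; rewrite !inE /eq2.
case: (i =P k) => [Eik _ | nik /= /eqP Eil] Hj.
  by rewrite Eik eq_sym in h; rewrite (negbTE h) /= in Hj; rewrite Hj.
by rewrite Eil eq_sym in h; rewrite (negbTE h) orbF in Hj; rewrite Eil eqxx Hj; case: (l == k); rewrite ?orbT.
Qed.

Lemma pvE i j k l (h : i != j) (h' : k != l) :
  (pv h == pv h') = eq2 i j k l.
Proof.
apply/eqP/idP.
- by move=> E; apply: set2_eq2 h (congr1 val E).
- rewrite /eq2 => H; apply: val_inj => /=.
  by case/orP: H => /andP[/eqP-> /eqP->]; rewrite // setUC.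
Qed.

Lemma prelE i j k l (h : i != j) (h' : k != l) :
  petersen_rel (pv h) (pv h') = [&& i != k, i != l, j != k & j != l].
Proof.
rewrite /petersen_rel /= disjoints_subset subUset !sub1set !inE.
by rewrite !negb_or !andbA.
Qed.

Lemma lt5 k : k < 5 -> 'I_5.
Proof. move=> h; exact: Ordinal h. Qed.

Definition o0 : 'I_5 := Ordinal (isT : 0 < 5).
Definition o1 : 'I_5 := Ordinal (isT : 1 < 5).
Definition o2 : 'I_5 := Ordinal (isT : 2 < 5).
Definition o3 : 'I_5 := Ordinal (isT : 3 < 5).
Definition o4 : 'I_5 := Ordinal (isT : 4 < 5).

Definition q01 := @pv o0 o1 isT.
Definition q23 := @pv o2 o3 isT.
Definition q04 := @pv o0 o4 isT.
Definition q12 := @pv o1 o2 isT.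
Definition q03 := @pv o0 o3 isT.
Definition q24 := @pv o2 o4 isT.
Definition q34 := @pv o3 o4 isT.

Definition pf (S : petersen_vertex) : petersen_vertex :=
  let X := val S in
  if (o2 \in X) && (o3 \in X) then q01
  else if (o0 \in X) && (o4 \in X) then q23
  else if (o1 \in X) && (o2 \in X) then q04
  else if (o0 \in X) && (o3 \in X) then q12
  else q34.

Lemma petersen_part : ~ CMH petersen_rel.
Proof.
apply: (@notCMH _ _ q23 [:: q04; q12; q03; q24] pf q01 q23 q24 q24).
- by move=> x y; rewrite /petersen_rel disjoint_sym.
- by rewrite /= !prelE.
- by rewrite /= /pf /= !inE /= !pvE.
- by rewrite /= /pf /= !inE /= !prelE.
- by rewrite !inE !eqxx !orbT.
- by rewrite !prelE.
- move=> [X hX]; rewrite /pf /= !inE /=.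
  rewrite /petersen_rel /=; apply/negP => /and3P[d1 d2 _].
  have sub : X \subset [set o2].
    apply/subsetP => i iX; rewrite inE.
    have := disjointFr d1 iX; have := disjointFr d2 iX; rewrite !inE.
    by case: i iX => [[|[|[|[|[|?]]]]] ?].
  have := subset_leq_card sub; rewrite cards1 (eqP hX).
  by [].
Qed.

Definition bv (b0 b1 b2 b3 b4 : bool) : bvec :=
  [ffun i : 'I_5 => nth false [:: b0; b1; b2; b3; b4] i].

Definition c0 : 'I_5 := Ordinal (isT : 0 < 5).
Definition c1 : 'I_5 := Ordinal (isT : 1 < 5).
Definition c2 : 'I_5 := Ordinal (isT : 2 < 5).
Definition c3 : 'I_5 := Ordinal (isT : 3 < 5).
Definition c4 : 'I_5 := Ordinal (isT : 4 < 5).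

Lemma bv_surj (z : bvec) : z = bv (z c0) (z c1) (z c2) (z c3) (z c4).
Proof.
apply/ffunP => i; rewrite ffunE.
by case: i => [[|[|[|[|[|?]]]]] hi] //=; congr (z _); apply: val_inj.
Qed.

Lemma antiE b0 b1 b2 b3 b4 :
  antipode (bv b0 b1 b2 b3 b4) = bv (~~ b0) (~~ b1) (~~ b2) (~~ b3) (~~ b4).
Proof.
apply/ffunP => i; rewrite !ffunE.
by case: i => [[|[|[|[|[|?]]]]] hi].
Qed.

Lemma bv_eq a0 a1 a2 a3 a4 b0 b1 b2 b3 b4 :
  (bv a0 a1 a2 a3 a4 == bv b0 b1 b2 b3 b4) =
  [&& a0 == b0, a1 == b1, a2 == b2, a3 == b3 & a4 == b4].
Proof.
apply/eqP/idP.
- move=> E.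
  have e0 := congr1 (fun f : bvec => f c0) E.
  have e1 := congr1 (fun f : bvec => f c1) E.
  have e2 := congr1 (fun f : bvec => f c2) E.
  have e3 := congr1 (fun f : bvec => f c3) E.
  have e4 := congr1 (fun f : bvec => f c4) E.
  move: e0 e1 e2 e3 e4; rewrite !ffunE /= => -> -> -> -> ->.
  by rewrite !eqxx.
- by case/and5P => /eqP-> /eqP-> /eqP-> /eqP-> /eqP->.
Qed.

Lemma cube_bv a0 a1 a2 a3 a4 b0 b1 b2 b3 b4 :
  cube_rel (bv a0 a1 a2 a3 a4) (bv b0 b1 b2 b3 b4) =
  ((a0 != b0) + (a1 != b1) + (a2 != b2) + (a3 != b3) + (a4 != b4) == 1).
Proof.
rewrite /cube_rel -sum1dep_card big_mkcond /=.
rewrite !big_ord_recl big_ord0 /= !ffunE /=.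
by case: (a0 != b0); case: (a1 != b1); case: (a2 != b2); case: (a3 != b3); case: (a4 != b4).
Qed.

Lemma cube_sym : symmetric cube_rel.
Proof.
move=> x y; rewrite /cube_rel.
suff -> : [set i | x i != y i] = [set i | y i != x i] by [].
by apply/setP => i; rewrite !inE eq_sym.
Qed.

Lemma cv_proof (x : bvec) : [exists y : bvec, [set x; antipode x] == [set y; antipode y]].
Proof. by apply/existsP; exists x. Qed.

Definition cv (x : bvec) : clebsch_vertex := exist _ [set x; antipode x] (cv_proof x).

Lemma ex2 (T : finType) (a b : T) (P : pred T) :
  [exists x in [set a; b], P x] = P a || P b.
Proof.
apply/existsP/orP.
- by move=> [x /andP[]]; rewrite !inE => /orP[] /eqP-> ->; [left|right].
- by case=> h; [exists a|exists b]; rewrite !inE eqxx ?orbT.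
Qed.

Lemma crel_gen (S U : clebsch_vertex) (x y : bvec) :
  val S = [set x; antipode x] -> val U = [set y; antipode y] ->
  clebsch_rel S U = [|| cube_rel x y, cube_rel x (antipode y),
                        cube_rel (antipode x) y | cube_rel (antipode x) (antipode y)].
Proof.
move=> hS hU; rewrite /clebsch_rel hS hU ex2 !ex2.
by rewrite !orbA.
Qed.

Lemma crel_cv x y : clebsch_rel (cv x) (cv y) =
  [|| cube_rel x y, cube_rel x (antipode y),
      cube_rel (antipode x) y | cube_rel (antipode x) (antipode y)].
Proof. exact: crel_gen. Qed.

Lemma antiK : involutive antipode.
Proof. by move=> x; apply/ffunP => i; rewrite !ffunE negbK. Qed.

Lemma cvE x y : (cv x == cv y) = (x == y) || (x == antipode y).
Proof.
apply/eqP/idP.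
- move=> E; have E' := congr1 val E; simpl in E'.
  have : x \in [set y; antipode y] by rewrite -E' !inE eqxx.
  by rewrite !inE.
- case/orP=> /eqP->; apply: val_inj => //=.
  by rewrite antiK setUC.
Qed.

Lemma clebsch_sym : symmetric clebsch_rel.
Proof.
move=> S U.
have [x hx] : exists x, val S = [set x; antipode x].
  by case: S => X /= /existsP [x /eqP ->]; exists x.
have [y hy] : exists y, val U = [set y; antipode y].
  by case: U => X /= /existsP [y /eqP ->]; exists y.
rewrite (@crel_gen _ _ x y) ?(@crel_gen _ _ y x) //=.
rewrite ![cube_rel y _]cube_sym ![cube_rel (antipode y) _]cube_sym.
by case: (cube_rel x y); case: (cube_rel x (antipode y)); case: (cube_rel (antipode x) y).
Qed.

Definition va := bv false false false false false.
Definition pa := bv true false false false false.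
Definition px := bv true true false false false.
Definition py := bv true true true false false.
Definition pb := bv true true true true false.
Definition ta := bv false true false false false.

Definition cf (S : clebsch_vertex) : clebsch_vertex :=
  if pa \in val S then cv va
  else if px \in val S then cv pa
  else if py \in val S then cv px
  else cv ta.

Lemma clebsch_part : ~ CMH clebsch_rel.
Proof.
apply: (@notCMH _ _ (cv pa) [:: cv px; cv py; cv pb] cf (cv va) (cv pa) (cv pb) (cv pb)).
- exact: clebsch_sym.
- by rewrite /= !crel_cv !antiE !cube_bv.
- by rewrite /= /cf /= !inE !antiE !bv_eq /= !cvE !antiE !bv_eq.
- by rewrite /= /cf /= !inE !antiE !bv_eq /= !crel_cv !antiE !cube_bv.
- by rewrite !inE !eqxx !orbT.
- by rewrite !crel_cv !antiE !cube_bv.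
- move=> w.
  have [z hz] : exists z, val w = [set z; antipode z].
    by case: w => X /= /existsP [z /eqP ->]; exists z.
  rewrite /cf /= !inE !antiE !bv_eq /=.
  rewrite (@crel_gen w (cv va) z va hz erefl) (@crel_gen w (cv ta) z ta hz erefl).
  rewrite (bv_surj z) !antiE !cube_bv.
  by case: (z c0); case: (z c1); case: (z c2); case: (z c3); case: (z c4).
Qed.

Theorem lemma7p1 :
  (forall s : nat, 2 < s -> ~ CMH (@LKss_rel s)) /\
  ~ CMH petersen_rel /\
  ~ CMH clebsch_rel.
Proof.
split; first exact: lkss_part.
split; [exact: petersen_part | exact: clebsch_part].
Qed.
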